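(* Let $\sigma$ be a signature and $\mathcal F\in\mathbb F_\sigma$. (i) For any generalized causal team $T$ over $\sigma$: $T\models^g\Phi^{\mathcal F}$ iff $\mathcal G\sim\mathcal F$ for all $(s,\mathcal G)\in T$, iff $T^{\mathcal F}=T$. (ii) For any nonempty causal team $T=(T^-,\mathcal G)$ over $\sigma$: $T\models^c\Phi^{\mathcal F}$ iff $\mathcal G\sim\mathcal F$.
   Context: A signature $\sigma=(\mathrm{Dom},\mathrm{Ran})$: $\mathrm{Dom}$ nonempty finite set of variables, each with nonempty finite range $\mathrm{Ran}(X)$; $\mathbf X=\mathbf x$ abbreviates $X_1=x_1\wedge\dots\wedge X_n=x_n$ ($\mathbf x\in\mathrm{Ran}(\mathbf X)=\prod\mathrm{Ran}(X_i)$), inconsistent if it contains $X=x,X=x'$ with $x\neq x'$. $\mathcal{CO}[\sigma]$-formulas: $\alpha::=X=x\mid\neg\alpha\mid\alpha\wedge\alpha\mid\alpha\vee\alpha\mid\mathbf X=\mathbf x\;\Box\!\!\rightarrow\alpha$; $\alpha\supset\beta$ abbreviates $\neg\alpha\vee\beta$. Assignments $s$ on $\mathrm{Dom}$ with $s(X)\in\mathrm{Ran}(X)$. A system of functions $\mathcal F$: for each $V\in\mathrm{En}(\mathcal F)\subseteq\mathrm{Dom}$ a set $PA^{\mathcal F}_V\subseteq\mathrm{Dom}\setminus\{V\}$ and $\mathcal F_V:\mathrm{Ran}(PA^{\mathcal F}_V)\to\mathrm{Ran}(V)$; $\mathrm{Ex}(\mathcal F)=\mathrm{Dom}\setminus\mathrm{En}(\mathcal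 F)$; only recursive systems (acyclic parent graph), forming $\mathbb F_\sigma$. $s$ is compatible with $\mathcal F$ if $s(V)=\mathcal F_V(s(PA^{\mathcal F}_V))$ for $V\in\mathrm{En}(\mathcal F)$; $\mathbb S_\sigma$ = set of compatible pairs $(s,\mathcal F)$. For consistent $\mathbf X=\mathbf x$, $\mathcal F_{\mathbf X=\mathbf x}$ is the restriction to $\mathrm{En}(\mathcal F)\setminus\mathbf X$; $s^{\mathcal F}_{\mathbf X=\mathbf x}$: $X_i\mapsto x_i$, $V\mapsto s(V)$ for $V\in\mathrm{Ex}(\mathcal F)\setminus\mathbf X$, $V\mapsto\mathcal F_V(s^{\mathcal F}_{\mathbf X=\mathbf x}(PA^{\mathcal F}_V))$ for $V\in\mathrm{En}(\mathcal F)\setminus\mathbf X$. Causal team $T=(T^-,\mathcal F)$: $T^-$ a set of assignments compatible with $\mathcal F$; causal subteams $(S^-,\mathcal F)$, $S^-\subseteq T^-$; $T_{\mathbf X=\mathbf x}=(\{s^{\mathcal F}_{\mathbf X=\mathbf x}:s\in T^-\},\mathcal F_{\mathbf X=\mathbf x})$; $\models^c$: $T\models X=x$ iff $s(X)=x$ for all $s\in T^-$; $T\models\neg\alpha$ iff $(\{s\},\mathcal F)\not\models\alpha$ for all $s\in T^-$; $\wedge$ classical; $T\models\alpha\vee\beta$ iff there are causal subteams $T_1,T_2$ with $T_1^-\cup T_2^-=T^-$, $T_1\models\alpha$, $T_2\models\beta$; $T\models\mathbf X=\mathbf x\;\Box\!\!\rightarrow\alpha$ iff $\mathbf X=\mathbf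 x$ inconsistent or $T_{\mathbf X=\mathbf x}\models\alpha$. Generalized causal team: a set $T\subseteq\mathbb S_\sigma$, $T^-=\{s:(s,\mathcal F)\in T\}$, $T_{\mathbf X=\mathbf x}=\{(s^{\mathcal F}_{\mathbf X=\mathbf x},\mathcal F_{\mathbf X=\mathbf x}):(s,\mathcal F)\in T\}$; $\models^g$: same clauses except $T\models\neg\alpha$ iff $\{(s,\mathcal F)\}\not\models\alpha$ for all $(s,\mathcal F)\in T$, and $T\models\alpha\vee\beta$ iff $T=T_1\cup T_2$ with $T_1\models\alpha$, $T_2\models\beta$. $\mathrm{Cn}(\mathcal F)$ = set of $V\in\mathrm{En}(\mathcal F)$ with $\mathcal F_V$ constant. $\mathcal F_V\sim\mathcal G_V$ iff $\mathcal F_V(\mathbf x\mathbf y)=\mathcal G_V(\mathbf x\mathbf z)$ for all $\mathbf x\in\mathrm{Ran}(PA^{\mathcal F}_V\cap PA^{\mathcal G}_V)$, $\mathbf y\in\mathrm{Ran}(PA^{\mathcal F}_V\setminus PA^{\mathcal G}_V)$, $\mathbf z\in\mathrm{Ran}(PA^{\mathcal G}_V\setminus PA^{\mathcal F}_V)$. $\mathcal F\sim\mathcal G$ iff $\mathrm{En}(\mathcal F)\setminus\mathrm{Cn}(\mathcal F)=\mathrm{En}(\mathcal G)\setminus\mathrm{Cn}(\mathcal G)$ and $\mathcal F_V\sim\mathcal G_V$ for each $V$ in this set. $T^{\mathcal F}=\{(s,\mathcal G)\in T:\mathcal G\sim\mathcal F\}$. For $V\in\mathrm{Dom}$ let $\mathbf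 W_V$ list $\mathrm{Dom}\setminus\{V\}$. $\Phi^{\mathcal F}:=\bigwedge_{V\in\mathrm{En}(\mathcal F)\setminus\mathrm{Cn}(\mathcal F)}\eta(V)\wedge\bigwedge_{V\in\mathrm{Dom}\setminus(\mathrm{En}(\mathcal F)\setminus\mathrm{Cn}(\mathcal F))}\xi(V)$, where $\eta(V)$ is the conjunction of all formulas $(\mathbf W=\mathbf w\wedge PA^{\mathcal F}_V=\mathbf p)\;\Box\!\!\rightarrow V=\mathcal F_V(\mathbf p)$ with $\mathbf W$ listing $\mathrm{Dom}\setminus(PA^{\mathcal F}_V\cup\{V\})$, $\mathbf w\in\mathrm{Ran}(\mathbf W)$, $\mathbf p\in\mathrm{Ran}(PA^{\mathcal F}_V)$, and $\xi(V)$ is the conjunction of all formulas $V=v\supset(\mathbf W_V=\mathbf w\;\Box\!\!\rightarrow V=v)$ with $v\in\mathrm{Ran}(V)$, $\mathbf w\in\mathrm{Ran}(\mathbf W_V)$. *)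

(* Defs.v *)
From mathcomp Require Import all_boot.
From Stdlib Require List.

Set Implicit Arguments.
Unset Strict Implicit.
Unset Printing Implicit Defensive.

Section CausalTeams.

(* Nonemptiness of Dom and of every Ran X is witnessed by X0 and r0
   (used only in the construction of Phi, as defaults). *)
Variable V : finType.
Variable Ran : V -> finType.

Definition assign := {dffun forall X : V, Ran X}.

(* formulas of CO[sigma]; the antecedent X1=x1 /\ ... /\ Xn=xn of a
   counterfactual is a list of (variable, value) pairs *)
Inductive form : Type :=
| FEq (X : V) (x : Ran X)
| FNeg of form
| FAnd of form & form
| FOr of form & form
| FCf of seq {X : V & Ran X} & form.

Definition FImp (a b : form) : form := FOr (FNeg a) b.

Definition consistent (xs : seq {X : V & Ran X}) : Prop :=
  forall p q, List.In p xs -> List.In q xs -> projT1 p = projT1 q -> p = q.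

Definition inX (xs : seq {X : V & Ran X}) (X : V) : bool :=
  has (fun p => projT1 p == X) xs.

(* A system of functions: sfun X = Some f iff X is endogenous, with
   F_X represented as a function of the whole assignment (required to depend
   only on the parents spa X); spa X = PA_X. *)
Record system := Sys {
  sfun : forall X : V, option (assign -> Ran X);
  spa  : V -> {set V}
}.

Definition En (F : system) : {set V} := [set X | sfun F X].

Definition wf_system (F : system) : Prop :=
  [/\ forall X, X \notin spa F X,
      forall X, sfun F X = None -> spa F X = set0,
      forall X (f : assign -> Ran X), sfun F X = Some f ->
        forall s t : assign, (forall Y, Y \in spa F X -> s Y = t Y) -> f s = f t
    & (* acyclicity of the parent graph (edge Y -> X iff Y in PA_X) *)
      forall X Y, Y \in spa F X -> ~~ connect (fun a b => a \in spa F b) X Y].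

Definition compatible (s : assign) (F : system) : Prop :=
  forall X (f : assign -> Ran X), sfun F X = Some f -> s X = f s.

Definition sys_interv (F : system) (xs : seq {X : V & Ran X}) : system :=
  Sys (fun X => if inX xs X then None else sfun F X)
      (fun X => if inX xs X then set0 else spa F X).

(* s' = s^F_{X=x} (for recursive F and consistent X=x there is exactly one) *)
Definition isol (F : system) (xs : seq {X : V & Ran X}) (s s' : assign) : Prop :=
  (forall p, List.In p xs -> s' (projT1 p) = projT2 p) /\
  (forall X, ~~ inX xs X ->
     match sfun F X with
     | None => s' X = s X
     | Some f => s' X = f s'
     end).

Definition gteam := assign * system -> Prop.

Definition in_S (p : assign * system) : Prop := wf_system p.2 /\ compatible p.1 p.2.

Definition ginterv (xs : seq {X : V & Ran X}) (T : gteam) : gteam :=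
  fun q => exists p, T p /\ q.2 = sys_interv p.2 xs /\ isol p.2 xs p.1 q.1.

Fixpoint gsat (T : gteam) (a : form) : Prop :=
  match a with
  | FEq X x => forall p, T p -> p.1 X = x
  | FNeg b => forall p, T p -> ~ gsat (fun q => q = p) b
  | FAnd b c => gsat T b /\ gsat T c
  | FOr b c => exists T1 T2 : gteam,
      (forall p, T p <-> T1 p \/ T2 p) /\ gsat T1 b /\ gsat T2 c
  | FCf xs b => ~ consistent xs \/ gsat (ginterv xs T) b
  end.

Fixpoint csat (Tm : assign -> Prop) (F : system) (a : form) : Prop :=
  match a with
  | FEq X x => forall s, Tm s -> s X = x
  | FNeg b => forall s, Tm s -> ~ csat (fun t => t = s) F b
  | FAnd b c => csat Tm F b /\ csat Tm F c
  | FOr b c => exists T1 T2 : assign -> Prop,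
      (forall s, Tm s <-> T1 s \/ T2 s) /\ csat T1 F b /\ csat T2 F c
  | FCf xs b => ~ consistent xs \/
      csat (fun s' => exists s, Tm s /\ isol F xs s s') (sys_interv F xs) b
  end.

Definition constb X (f : assign -> Ran X) : bool :=
  [forall s : assign, [forall t : assign, f s == f t]].

Definition noncst (F : system) : {set V} :=
  [set X | match sfun F X with Some f => ~~ constb f | None => false end].

Definition fn_equiv (F G : system) (X : V) : Prop :=
  match sfun F X, sfun G X with
  | Some f, Some g => forall s t : assign,
      (forall Y, Y \in spa F X -> Y \in spa G X -> s Y = t Y) -> f s = g t
  | _, _ => False
  end.

Definition sys_equiv (F G : system) : Prop :=
  noncst F = noncst G /\ forall X, X \in noncst F -> fn_equiv F G X.

Definition gteamF (F : system) (T : gteam) : gteam :=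
  fun p => T p /\ sys_equiv p.2 F.

Fixpoint bigAnd (d : form) (l : seq form) : form :=
  match l with
  | [::] => d
  | [:: a] => a
  | a :: l' => FAnd a (bigAnd d l')
  end.

Variable X0 : V.
Variable r0 : forall X : V, Ran X.

Definition dflt : form := FEq (r0 X0).

(* assignments t with t X fixed to r0 X: they enumerate Ran(Dom \ {X}) once *)
Definition restr_enum (X : V) : seq assign :=
  filter (fun t : assign => t X == r0 X) (enum {: assign}).

Definition eta (F : system) (X : V) (f : assign -> Ran X) : form :=
  bigAnd dflt
    [seq FCf ([seq existT (fun Y : V => Ran Y) Y (t Y)
                 | Y <- enum V & (Y != X) && (Y \notin spa F X)] ++
              [seq existT (fun Y : V => Ran Y) Y (t Y)
                 | Y <- enum V & Y \in spa F X])
             (FEq (f t))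
    | t : assign <- restr_enum X].

Definition xi (X : V) : form :=
  bigAnd dflt
    (flatten [seq [seq FImp (FEq v)
                     (FCf [seq existT (fun Y : V => Ran Y) Y (t Y)
                             | Y <- enum V & Y != X] (FEq v))
                   | t : assign <- restr_enum X]
             | v <- enum (Ran X)]).

Definition Phi (F : system) : form :=
  bigAnd dflt
    [seq match sfun F X with
         | Some f => if constb f then xi X else eta F f
         | None => xi X
         end
    | X <- enum V].

End CausalTeams.

(* Main.v *)
Require Import Defs.
From mathcomp Require Import all_boot.
From Stdlib Require Import FunctionalExtensionality PropExtensionality.
Set Implicit Arguments. Unset Strict Implicit. Unset Printing Implicit Defensive.

Definition val {V : finType} {Ran : V -> finType} (G : system Ran) (X : V) (s t : assign Ran) : Ran X :=
  match sfun G X with Some g => g t | None => s X end.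

Definition shape {V : finType} {Ran : V -> finType} (xs : seq {Y : V & Ran Y}) (t : assign Ran) (X : V) :=
  (forall p, List.In p xs -> exists2 Y, Y != X & p = existT _ Y (t Y)) /\
  (forall Y, Y != X -> inX xs Y).

Lemma inXP {V : finType} {Ran : V -> finType} (xs : seq {Y : V & Ran Y}) Y :
  inX xs Y -> exists p, List.In p xs /\ projT1 p = Y.
Proof.
elim: xs => [//|p xs IH] /=; rewrite /inX /=; case/orP => [/eqP <-|/IH [q [Hq <-]]].
  by exists p; split=> //; left.
by exists q; split=> //; right.
Qed.

Lemma shape_cons {V : finType} {Ran : V -> finType} (xs : seq {Y : V & Ran Y}) t X :
  shape xs t X -> consistent xs.
Proof.
move=> [H1 _] p q /H1 [Y _ ->] /H1 [Y' _ ->] /= E; by subst Y'.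
Qed.

Lemma shape_notin {V : finType} {Ran : V -> finType} (xs : seq {Y : V & Ran Y}) t X :
  shape xs t X -> ~~ inX xs X.
Proof.
move=> [H1 _]; apply/negP => /inXP [p [/H1 [Y HY ->]] /= E].
by rewrite E eqxx in HY.
Qed.

Lemma wf_dep {V : finType} {Ran : V -> finType} (G : system Ran) X (g : assign Ran -> Ran X) (s t : assign Ran) :
  wf_system G -> sfun G X = Some g -> (forall Y, Y != X -> s Y = t Y) -> g s = g t.
Proof.
case=> W1 _ W3 _ E H; apply: (W3 _ _ E) => Y HY; apply: H.
by apply/eqP => E'; subst Y; move: (W1 X); rewrite HY.
Qed.

Lemma isol_val {V : finType} {Ran : V -> finType} (G : system Ran) xs (t : assign Ran) X (s s' : assign Ran) :
  wf_system G -> shape xs t X -> isol G xs s s' -> s' X = val G X s t.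
Proof.
move=> W Sh [I1 I2]; have := I2 X (shape_notin Sh); rewrite /val.
case E: (sfun G X) => [g|] // ->; apply: (wf_dep W E) => Y /(proj2 Sh) /inXP [p [Hp E']].
move: (I1 p Hp); case: (proj1 Sh p Hp) => Z _ Ep; subst p; by move: E' => /= ->.
Qed.

Lemma isol_ex {V : finType} {Ran : V -> finType} (G : system Ran) xs (t : assign Ran) X (s : assign Ran) :
  wf_system G -> shape xs t X -> exists s', isol G xs s s'.
Proof.
move=> W Sh.
pose s' : assign Ran := finfun (dfwith (fun Y => t Y) (val G X s t)).
have s'X : s' X = val G X s t by rewrite ffunE dfwith_in.
have s'Y : forall Y, Y != X -> s' Y = t Y.
  by move=> Y HY; rewrite ffunE dfwith_out // eq_sym.
exists s'; split.
  move=> p /(proj1 Sh) [Y HY ->] /=; exact: s'Y.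
move=> Z HZ; have EZ : Z = X.
  apply/eqP; apply: contraNT HZ => /(proj2 Sh); done.
subst Z; rewrite s'X /val; case E: (sfun G X) => [g|] //.
by symmetry; apply: (wf_dep W E).
Qed.
Lemma team_ext (A : Type) (T T' : A -> Prop) : (forall p, T p <-> T' p) -> T = T'.
Proof. move=> H; apply: functional_extensionality => p; apply: propositional_extensionality; exact: H. Qed.

Definition cteam {V : finType} {Ran : V -> finType} (Tm : assign Ran -> Prop) (G : system Ran) : gteam Ran :=
  fun p => Tm p.1 /\ p.2 = G.

Lemma transfer {V : finType} {Ran : V -> finType} (a : form Ran) :
  forall Tm G, csat Tm G a <-> gsat (cteam Tm G) a.
Proof.
elim: a => [X x|b IH|b IHb c IHc|b IHb c IHc|xs b IH] Tm G /=.
- split=> H. by move=> p [/H]. by move=> s Hs; apply: (H (s, G)).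
- split=> H.
  + move=> [s G'] [/= Hs ->].
    have <- : cteam (fun t => t = s) G = (fun q => q = (s, G)).
      by apply: team_ext => -[u K]; rewrite /cteam /=; split=> [[-> ->]|[-> ->]].
    by rewrite -IH; exact: H.
  + move=> s Hs; rewrite IH.
    have -> : cteam (fun t => t = s) G = (fun q => q = (s, G)).
      by apply: team_ext => -[u K]; rewrite /cteam /=; split=> [[-> ->]|[-> ->]].
    by apply: (H (s, G)).
- by rewrite IHb IHc.
- split=> [[T1 [T2 [HT [H1 H2]]]]|[T1 [T2 [HT [H1 H2]]]]].
  + exists (cteam T1 G), (cteam T2 G); split; last by rewrite -IHb -IHc.
    move=> [s K]; rewrite /cteam /= HT; tauto.
  + exists (fun s => T1 (s, G)), (fun s => T2 (s, G)); split.
      move=> s; rewrite -HT /cteam /=; tauto.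
    rewrite IHb IHc; split.
    * have -> // : cteam (fun s => T1 (s, G)) G = T1.
      apply: team_ext => -[s K]; rewrite /cteam /=; split=> [[? ->] //|H].
      have : T1 (s, K) \/ T2 (s, K) by left.
      by move/HT => -[_ /= E]; subst K.
    * have -> // : cteam (fun s => T2 (s, G)) G = T2.
      apply: team_ext => -[s K]; rewrite /cteam /=; split=> [[? ->] //|H].
      have : T1 (s, K) \/ T2 (s, K) by right.
      by move/HT => -[_ /= E]; subst K.
- rewrite IH.
  have -> // : cteam (fun s' => exists s, Tm s /\ isol G xs s s') (sys_interv G xs) = ginterv xs (cteam Tm G).
  apply: team_ext => -[u K]; rewrite /cteam /ginterv /=; split.
  + move=> [[s [Hs Hi]] ->]; by exists (s, G).
  + by move=> [[s K'] [[/= Hs ->] [/= -> Hi]]]; split=> //; exists s.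
Qed.

Lemma In_mem (T : eqType) (x : T) (s : seq T) : List.In x s <-> x \in s.
Proof.
elim: s => [//|y s IH] /=; rewrite in_cons; split.
  by case=> [->|/IH ->]; [rewrite eqxx|rewrite orbT].
by case/orP => [/eqP ->|/IH H]; [left|right].
Qed.

Lemma In_flatten (T : Type) (a : T) (ss : seq (seq T)) :
  List.In a (flatten ss) <-> exists s, List.In s ss /\ List.In a s.
Proof.
elim: ss => [|s ss IH] /=; first by split=> // -[s []].
rewrite List.in_app_iff IH; split.
  by case=> [H|[s' [H1 H2]]]; [exists s; split; [left|]|exists s'; split; [right|]].
by case=> s' [[<-|H1] H2]; [left|right; exists s'].
Qed.

Lemma shape_map {V : finType} {Ran : V -> finType} (s : seq V) (t : assign Ran) X :
  (forall Y, (Y \in s) = (Y != X)) -> shape [seq existT _ Y (t Y) | Y <- s] t X.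
Proof.
move=> Hs; split.
  move=> p /List.in_map_iff [Y [<- /In_mem]]; rewrite Hs => HY; by exists Y.
move=> Y; rewrite -Hs => HY; rewrite /inX has_map; apply/hasP; exists Y => //=.
Qed.

Lemma gsat_cf_eq {V : finType} {Ran : V -> finType} (T : gteam Ran) xs (t : assign Ran) X (v : Ran X) :
  shape xs t X -> (forall p, T p -> wf_system p.2) ->
  (gsat T (FCf xs (FEq v)) <-> forall p, T p -> val p.2 X p.1 t = v).
Proof.
move=> Sh W /=; split.
  case=> [/(_ (shape_cons Sh)) //|H] p Tp.
  have [s' Hs'] := isol_ex p.1 (W _ Tp) Sh.
  rewrite -(isol_val (W _ Tp) Sh Hs'); apply: (H (s', sys_interv p.2 xs)).
  by exists p.
move=> H; right => q [p [Tp [_ Hi]]]; rewrite (isol_val (W _ Tp) Sh Hi); exact: H.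
Qed.

Lemma gsat_imp {V : finType} {Ran : V -> finType} (T : gteam Ran) xs (t : assign Ran) X (v : Ran X) :
  shape xs t X -> (forall p, T p -> wf_system p.2) ->
  (gsat T (FImp (FEq v) (FCf xs (FEq v))) <-> forall p, T p -> p.1 X = v -> val p.2 X p.1 t = v).
Proof.
move=> Sh W; split.
  move=> [T1 [T2 [HT [H1 H2]]]] p Tp Hv.
  have W2 : forall p, T2 p -> wf_system p.2 by move=> q Tq; apply: W; apply/HT; right.
  have {}H2 := proj1 (@gsat_cf_eq _ _ _ _ _ _ v Sh W2) H2.
  case/HT: Tp => [T1p|T2p]; last exact: H2.
  by case: (H1 p T1p); move=> q ->.
move=> H; exists (fun p => T p /\ p.1 X <> v), (fun p => T p /\ p.1 X = v); split.
  move=> p; split; last by case=> -[].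
  move=> Tp; case: (eqVneq (p.1 X) v) => [E|/eqP E]; [right|left]; by split.
split.
  move=> p [Tp Hp] /= Hs; apply: Hp; exact: (Hs p).
apply: (proj2 (@gsat_cf_eq _ _ _ _ _ _ v Sh _)); last by move=> p [Tp Hp]; apply: H.
by move=> p [Tp _]; apply: W.
Qed.

Lemma gsat_bigAnd {V : finType} {Ran : V -> finType} (T : gteam Ran) d l :
  (exists a, List.In a l) -> (gsat T (bigAnd d l) <-> forall a, List.In a l -> gsat T a).
Proof.
case: l => [[a []]|a l _].
elim: l a => [|b l IH] a /=.
  by split=> [H c [<-|[]]|H]; [|apply: H; left].
rewrite IH; split=> [[Ha Hl] c [<-|Hc]|H] //; first exact: Hl.
by split=> [|c Hc]; apply: H; [left|right].
Qed.

Lemma gsat_bigAnd_map {V : finType} {Ran : V -> finType} (A : Type) (T : gteam Ran) d (g : A -> form Ran) s :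
  (exists x, List.In x s) -> (gsat T (bigAnd d (map g s)) <-> forall x, List.In x s -> gsat T (g x)).
Proof.
move=> [x Hx]; rewrite gsat_bigAnd; last by exists (g x); apply: List.in_map.
split=> H; first by move=> y Hy; apply: H; apply: List.in_map.
by move=> a /List.in_map_iff [y [<- Hy]]; apply: H.
Qed.

Lemma in_restr {V : finType} {Ran : V -> finType} (r0 : forall X, Ran X) X (t : assign Ran) :
  List.In t (restr_enum r0 X) <-> t X = r0 X.
Proof. by rewrite In_mem /restr_enum mem_filter mem_enum andbT; split => /eqP. Qed.

Lemma restr_ne {V : finType} {Ran : V -> finType} (r0 : forall X, Ran X) X :
  exists t, List.In t (restr_enum r0 X).
Proof. by exists (finfun r0); rewrite in_restr ffunE. Qed.

Lemma gsat_eta {V : finType} {Ran : V -> finType} (X0 : V) (r0 : forall X, Ran X) (F : system Ran) X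
   (f : assign Ran -> Ran X) (T : gteam Ran) :
  X \notin spa F X -> (forall p, T p -> wf_system p.2) ->
  (gsat T (eta X0 r0 F f) <-> forall p, T p -> forall t : assign Ran, t X = r0 X -> val p.2 X p.1 t = f t).
Proof.
move=> HX W; rewrite /eta gsat_bigAnd_map; last exact: restr_ne.
have Sh : forall t : assign Ran, shape ([seq existT (fun Y : V => Ran Y) Y (t Y)
                 | Y <- enum V & (Y != X) && (Y \notin spa F X)] ++
              [seq existT (fun Y : V => Ran Y) Y (t Y)
                 | Y <- enum V & Y \in spa F X]) t X.
  move=> t; rewrite -map_cat; apply: shape_map => Y.
  rewrite mem_cat !(mem_filter _ _ (enum V)) mem_enum !andbT.
  case HY: (Y \in spa F X); rewrite /= ?andbT ?orbF ?orbT //.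
  by apply/esym/eqP => E; subst Y; rewrite HY in HX.
split=> H.
  move=> p Tp t Ht; have := H t (proj2 (in_restr _ _ _) Ht).
  by move/(@gsat_cf_eq _ _ _ _ _ _ (f t) (Sh t) W); apply.
move=> t /in_restr Ht; apply/(@gsat_cf_eq _ _ _ _ _ _ (f t) (Sh t) W) => p Tp; exact: H.
Qed.

Lemma gsat_xi {V : finType} {Ran : V -> finType} (X0 : V) (r0 : forall X, Ran X) X (T : gteam Ran) :
  (forall p, T p -> wf_system p.2) ->
  (gsat T (xi X0 r0 X) <-> forall p, T p -> forall t : assign Ran, t X = r0 X -> val p.2 X p.1 t = p.1 X).
Proof.
move=> W.
have Sh : forall t : assign Ran, shape [seq existT (fun Y : V => Ran Y) Y (t Y)
                             | Y <- enum V & Y != X] t X.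
  move=> t; apply: shape_map => Y.
  by rewrite (mem_filter _ _ (enum V)) mem_enum andbT.
rewrite /xi gsat_bigAnd; last first.
  have [t Ht] := restr_ne r0 X.
  eexists; apply/In_flatten; eexists; split.
    apply/List.in_map_iff; exists (r0 X); split; first reflexivity.
    by apply/In_mem; rewrite mem_enum.
  exact: (List.in_map _ _ _ Ht).
split=> H.
  move=> p Tp t Ht.
  have Hin : List.In (FImp (FEq (p.1 X)) (FCf [seq existT (fun Y : V => Ran Y) Y (t Y) | Y <- enum V & Y != X] (FEq (p.1 X)))) (flatten [seq [seq FImp (FEq v)
                     (FCf [seq existT (fun Y : V => Ran Y) Y (t Y)
                             | Y <- enum V & Y != X] (FEq v))
                   | t : assign Ran <- restr_enum r0 X]
             | v <- enum (Ran X)]).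
    apply/In_flatten; eexists; split.
      apply/List.in_map_iff; exists (p.1 X); split; first reflexivity.
      by apply/In_mem; rewrite mem_enum.
    by apply/List.in_map_iff; exists t; split; [reflexivity|apply/in_restr].
  have := H _ Hin.
  move/(@gsat_imp _ _ _ _ _ _ (p.1 X) (Sh t) W) => H'; exact: H'.
move=> a /In_flatten [s [/List.in_map_iff [v [<- _]] /List.in_map_iff [t [<- /in_restr Ht]]]].
apply/(@gsat_imp _ _ _ _ _ _ v (Sh t) W) => p Tp Hv; rewrite -Hv; exact: H.
Qed.

Definition Qx {V : finType} {Ran : V -> finType} (r0 : forall X, Ran X) (F G : system Ran) (s : assign Ran) X : Prop :=
  match sfun F X with
  | Some f => if constb f then (forall t : assign Ran, t X = r0 X -> val G X s t = s X)
              else (forall t : assign Ran, t X = r0 X -> val G X s t = f t)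
  | None => forall t : assign Ran, t X = r0 X -> val G X s t = s X
  end.

Lemma gsat_Phi {V : finType} {Ran : V -> finType} (X0 : V) (r0 : forall X, Ran X) (F : system Ran) (T : gteam Ran) :
  wf_system F -> (forall p, T p -> wf_system p.2) ->
  (gsat T (Phi X0 r0 F) <-> forall p, T p -> forall X, Qx r0 F p.2 p.1 X).
Proof.
move=> WF W; have XF : forall X, X \notin spa F X by case: WF.
rewrite /Phi gsat_bigAnd_map; last by exists X0; apply/In_mem; rewrite mem_enum.
split=> H.
  move=> p Tp X; have := H X (proj2 (In_mem _ _) (mem_enum _ X)); rewrite /Qx.
  case E: (sfun F X) => [f|]; [case: (constb f)|].
  - by move/(gsat_xi X0 r0 X W); apply.
  - by move/(gsat_eta X0 r0 f (XF X) W); apply.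
  - by move/(gsat_xi X0 r0 X W); apply.
move=> X _; case E: (sfun F X) => [f|]; [case Cf: (constb f)|].
- by apply/(gsat_xi X0 r0 X W) => p Tp; have := H p Tp X; rewrite /Qx E Cf.
- by apply/(gsat_eta X0 r0 f (XF X) W) => p Tp; have := H p Tp X; rewrite /Qx E Cf.
- by apply/(gsat_xi X0 r0 X W) => p Tp; have := H p Tp X; rewrite /Qx E.
Qed.

Lemma constbP {V : finType} {Ran : V -> finType} X (g : assign Ran -> Ran X) :
  reflect (forall a b, g a = g b) (constb g).
Proof.
apply: (iffP forallP) => [H a b|H a]; first exact/eqP/(forallP (H a) b).
by apply/forallP => b; apply/eqP/H.
Qed.

Lemma rt_ex {V : finType} {Ran : V -> finType} (r0 : forall X, Ran X) X (a : assign Ran) :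
  exists t : assign Ran, t X = r0 X /\ forall Y, Y != X -> t Y = a Y.
Proof.
exists (finfun (fun Y => if Y == X then r0 Y else a Y)); split; first by rewrite ffunE eqxx.
by move=> Y HY; rewrite ffunE (negbTE HY).
Qed.

Lemma restr_all {V : finType} {Ran : V -> finType} (r0 : forall X, Ran X) (G : system Ran) X
  (g : assign Ran -> Ran X) (P : Ran X -> Prop) :
  wf_system G -> sfun G X = Some g ->
  (forall t : assign Ran, t X = r0 X -> P (g t)) -> forall a, P (g a).
Proof.
move=> W E H a; have [t [Ht Ha]] := rt_ex r0 X a.
by rewrite -(wf_dep W E Ha); apply: H.
Qed.

Lemma constG {V : finType} {Ran : V -> finType} (r0 : forall X, Ran X) (G : system Ran) X
  (g : assign Ran -> Ran X) (s : assign Ran) :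
  wf_system G -> compatible s G -> sfun G X = Some g ->
  ((forall t : assign Ran, t X = r0 X -> g t = s X) <-> constb g).
Proof.
move=> W C E; split.
  move=> H; apply/constbP => a b.
  by rewrite (restr_all (P := fun y => y = s X) W E H a) (restr_all (P := fun y => y = s X) W E H b).
by move/constbP => H t _; rewrite (C X g E); apply: H.
Qed.

Lemma perX {V : finType} {Ran : V -> finType} (r0 : forall X, Ran X) (F G : system Ran) (s : assign Ran) X :
  wf_system F -> wf_system G -> compatible s G ->
  (Qx r0 F G s X <-> ((X \in noncst G) = (X \in noncst F) /\ (X \in noncst F -> fn_equiv G F X))).
Proof.
move=> WF WG C; rewrite /Qx !inE /fn_equiv /val.
case EF: (sfun F X) => [f|]; case EG: (sfun G X) => [g|].
- case Cf: (constb f) => /=.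
  + rewrite (constG r0 WG C EG); case: (constb g); split=> //; by case.
  + split.
      move=> H.
      have Hga : forall a, g a = f a.
        move=> a; have [t [Ht Ha]] := rt_ex r0 X a.
        by rewrite -(wf_dep WG EG Ha) -(wf_dep WF EF Ha) H.
      split.
        apply/negP => /constbP Hg; move/negbT: Cf => /negP; apply; apply/constbP => a b.
        by rewrite -!Hga; apply: Hg.
      move=> _ a b Hab.
      pose c : assign Ran := finfun (fun Y => if Y \in spa G X then a Y else b Y).
      case: WG => _ _ WG3 _; case: WF => _ _ WF3 _.
      rewrite (WG3 X g EG a c); last by move=> Y HY; rewrite ffunE HY.
      rewrite Hga; apply: (WF3 X f EF) => Y HY; rewrite ffunE.
      by case: ifP => // HG; apply: Hab.
    move=> [_ /(_ isT) H] t Ht; exact: H.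
- case Cf: (constb f) => /=; first by split.
  split; last by case.
  move=> H; have : constb f; last by rewrite Cf.
  apply/constbP => a b.
  have HF := restr_all (P := fun y => y = s X) WF EF (fun t Ht => esym (H t Ht)).
  by rewrite !HF.

- rewrite (constG r0 WG C EG) /=; case: (constb g); split=> //; by case.
- by split.
Qed.

Lemma core {V : finType} {Ran : V -> finType} (r0 : forall X, Ran X) (F G : system Ran) (s : assign Ran) :
  wf_system F -> wf_system G -> compatible s G ->
  ((forall X, Qx r0 F G s X) <-> sys_equiv G F).
Proof.
move=> WF WG C; split.
  move=> H; split.
    by apply/setP => X; exact: (proj1 (proj1 (perX r0 X WF WG C) (H X))).
  move=> X HX; have [E H'] := proj1 (perX r0 X WF WG C) (H X).
  by apply: H'; rewrite -E.
move=> [E H] X; apply/(perX r0 X WF WG C); split; first by rewrite E.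
by move=> HX; apply: H; rewrite E.
Qed.

Theorem theorem3p4 (V : finType) (Ran : V -> finType)
    (X0 : V) (r0 : forall X : V, Ran X) (* Dom and all Ran(X) nonempty *)
    (F : system Ran) (HF : wf_system F) :
  (* (i) generalized causal teams T ⊆ S_sigma *)
  (forall T : gteam Ran, (forall p, T p -> in_S p) ->
     (gsat T (Phi X0 r0 F) <-> (forall p, T p -> sys_equiv p.2 F)) /\
     ((forall p, T p -> sys_equiv p.2 F) <-> gteamF F T = T)) /\
  (* (ii) nonempty causal teams (T^-, G) *)
  (forall (Tm : assign Ran -> Prop) (G : system Ran),
     wf_system G -> (forall s, Tm s -> compatible s G) -> (exists s, Tm s) ->
     (csat Tm G (Phi X0 r0 F) <-> sys_equiv G F)).
Proof.
split.
  move=> T HT; have W : forall p, T p -> wf_system p.2 by move=> p /HT [].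
  rewrite gsat_Phi //; split.
    split=> H p Tp; have [Wp Cp] := HT p Tp.
      exact/(core r0 HF Wp Cp)/H.
    exact/(core r0 HF Wp Cp)/H.
  split.
    move=> H; apply: team_ext => p; rewrite /gteamF; split; first by case.
    by move=> Tp; split=> //; apply: H.
  move=> E p Tp; have : gteamF F T p by rewrite E.
  by case.
move=> Tm G WG CG [s0 Hs0].
rewrite transfer gsat_Phi //; last by move=> p [_ ->].
split.
  move=> H; apply/(core r0 HF WG (CG s0 Hs0)); exact: (H (s0, G) (conj Hs0 erefl)).
move=> E [s K] [/= Hs EK]; subst K; apply/(core r0 HF WG (CG s Hs)); exact: E.
Qed.
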